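(* Let $\mathcal{C}$ be a full reflective subcategory of $\mathsf{Top}$, closed under isomorphisms and containing the two-point discrete space, and suppose $\mathcal{C}$ is properly contained in the category $\mathsf{Top}_1$ of T$_1$-spaces. If $\mathcal{C}$ contains every topological space whose topology is the infimum (in the lattice of topologies on its underlying set) of finitely many ultraspace topologies on that set, then the empty space is the only finitely generated object of $\mathcal{C}$.
   Context: Given a set $X$, a point $x\in X$ and a free ultrafilter $\mathcal{U}$ on $X$ (one containing no finite sets), the corresponding ultraspace topology on $X$ makes every point other than $x$ isolated, and the neighbourhoods of $x$ are exactly the sets $U\cup\{x\}$ with $U\in\mathcal{U}$. An object $X$ of $\mathcal{C}$ is finitely generated if for every directed diagram $(Z_i)_{i\in I}$ in $\mathcal{C}$ (indexed by a directed poset, i.e. every finite subset has an upper bound) all of whose connecting morphisms $z_{i,j}$ are monomorphisms, with colimit cocone $c_i:Z_i\to Z$ in $\mathcal{C}$, every morphism $f:X\to Z$ factorizes as $f=c_i\cdot g$ for some $i$ and $g:X\to Z_i$, and if also $f=c_i\cdot g'$ then $z_{i,j}\cdot g=z_{i,j}\cdot g'$ for some connecting morphism $z_{i,j}$. *)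

(* Defs.v *)
From Stdlib Require Import List.
Import ListNotations.

Record space := Space {
  carrier :> Type;
  is_open : (carrier -> Prop) -> Prop;
  open_full : is_open (fun _ => True);
  open_inter : forall A B, is_open A -> is_open B -> is_open (fun x => A x /\ B x);
  open_union : forall F : (carrier -> Prop) -> Prop,
      (forall A, F A -> is_open A) -> is_open (fun x => exists A, F A /\ A x)
}.

Record cmap (X Y : space) := CMap {
  fn :> X -> Y;
  fn_cont : forall V, is_open Y V -> is_open X (fun x => V (fn x))
}.
Arguments fn {X Y}.

Definition comp {X Y Z : space} (g : cmap Y Z) (f : cmap X Y) : cmap X Z.
Proof.
  refine (CMap X Z (fun x => g (f x)) _).
  intros V HV. exact (fn_cont _ _ f _ (fn_cont _ _ g V HV)).
Defined.

Definition idmap (X : space) : cmap X X.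
Proof. refine (CMap X X (fun x => x) _). intros V HV; exact HV. Defined.

Definition meq {X Y : space} (f g : cmap X Y) : Prop := forall x, f x = g x.

(** A "subcategory" of Top is given by a predicate on objects; it is full
    (all continuous maps between its objects are morphisms). *)
Definition subcat := space -> Prop.

Definition homeomorphic (X Y : space) : Prop :=
  exists (f : cmap X Y) (g : cmap Y X), meq (comp g f) (idmap X) /\ meq (comp f g) (idmap Y).

Definition iso_closed (C : subcat) : Prop :=
  forall X Y, homeomorphic X Y -> C X -> C Y.

Definition reflective (C : subcat) : Prop :=
  forall X : space, exists (R : space) (eta : cmap X R), C R /\
    forall Y : space, C Y -> forall f : cmap X Y,
      exists g : cmap R Y, meq (comp g eta) f /\
        forall g' : cmap R Y, meq (comp g' eta) f -> meq g' g.

Definition discrete (X : space) : Prop := forall O, is_open X O.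

Definition contains_two_point_discrete (C : subcat) : Prop :=
  exists S : space, C S /\ discrete S /\
    exists a b : S, a <> b /\ forall x : S, x = a \/ x = b.

Definition T1 (X : space) : Prop :=
  forall x y : X, x <> y -> exists O, is_open X O /\ O x /\ ~ O y.

Definition proper_in_Top1 (C : subcat) : Prop :=
  (forall X, C X -> T1 X) /\ exists X, T1 X /\ ~ C X.

Definition finite_set {X : Type} (A : X -> Prop) : Prop :=
  exists l : list X, forall x, A x -> In x l.

Definition ultrafilter {X : Type} (U : (X -> Prop) -> Prop) : Prop :=
  ~ U (fun _ => False) /\
  U (fun _ => True) /\
  (forall A B : X -> Prop, U A -> (forall x, A x -> B x) -> U B) /\
  (forall A B, U A -> U B -> U (fun x => A x /\ B x)) /\
  (forall A, U A \/ U (fun x => ~ A x)).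

Definition free_ultrafilter {X : Type} (U : (X -> Prop) -> Prop) : Prop :=
  ultrafilter U /\ forall A, finite_set A -> ~ U A.

(** Open sets of the ultraspace topology given by the point x and U:
    every point other than x is isolated, and the neighbourhoods of x are
    the sets V ∪ {x} with V ∈ U (and their supersets). *)
Definition ultra_open {X : Type} (x : X) (U : (X -> Prop) -> Prop) (O : X -> Prop) : Prop :=
  O x -> exists V, U V /\ forall y, (V y \/ y = x) -> O y.

(** The topology of S is the infimum (= intersection of the families of open
    sets) of finitely many (at least one) ultraspace topologies on its carrier. *)
Definition inf_of_finitely_many_ultraspaces (S : space) : Prop :=
  exists l : list (S * ((S -> Prop) -> Prop)),
    l <> [] /\ (forall p, In p l -> free_ultrafilter (snd p)) /\
    forall O, is_open S O <-> (forall p, In p l -> ultra_open (fst p) (snd p) O).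

Definition mono_in (C : subcat) {X Y : space} (m : cmap X Y) : Prop :=
  forall W, C W -> forall g h : cmap W X, meq (comp m g) (comp m h) -> meq g h.

Record ddiagram (C : subcat) := DDiagram {
  idx : Type;
  le : idx -> idx -> Prop;
  le_refl : forall i, le i i;
  le_trans : forall i j k, le i j -> le j k -> le i k;
  le_antisym : forall i j, le i j -> le j i -> i = j;
  directed : forall l : list idx, exists k, forall i, In i l -> le i k;
  obj : idx -> space;
  objC : forall i, C (obj i);
  arr : forall i j, le i j -> cmap (obj i) (obj j);
  arr_id : forall i (h : le i i), meq (arr i i h) (idmap (obj i));
  arr_comp : forall i j k (h1 : le i j) (h2 : le j k) (h3 : le i k),
      meq (arr i k h3) (comp (arr j k h2) (arr i j h1));
  arr_mono : forall i j (h : le i j), mono_in C (arr i j h)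
}.
Arguments idx {C}. Arguments le {C}. Arguments obj {C}. Arguments arr {C}.

Definition is_cocone {C : subcat} (D : ddiagram C) (Z : space)
    (c : forall i, cmap (obj D i) Z) : Prop :=
  forall i j (h : le D i j), meq (comp (c j) (arr D i j h)) (c i).

Definition is_colimit_in (C : subcat) (D : ddiagram C) (Z : space)
    (c : forall i, cmap (obj D i) Z) : Prop :=
  C Z /\ is_cocone D Z c /\
  forall W, C W -> forall d : forall i, cmap (obj D i) W, is_cocone D W d ->
    exists u : cmap Z W, (forall i, meq (comp u (c i)) (d i)) /\
      forall u' : cmap Z W, (forall i, meq (comp u' (c i)) (d i)) -> meq u' u.

Definition finitely_generated (C : subcat) (X : space) : Prop :=
  forall (D : ddiagram C) (Z : space) (c : forall i, cmap (obj D i) Z),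
    is_colimit_in C D Z c ->
    forall f : cmap X Z,
      (exists i (g : cmap X (obj D i)), meq f (comp (c i) g)) /\
      (forall i (g g' : cmap X (obj D i)),
          meq f (comp (c i) g) -> meq f (comp (c i) g') ->
          exists j (h : le D i j), meq (comp (arr D i j h) g) (comp (arr D i j h) g')).

(* Main.v *)
Require Import Defs.
From mathcomp Require classical_sets filter.
From Stdlib Require Import Lia List Classical FunctionalExtensionality PropExtensionality ClassicalEpsilon ProofIrrelevance.
Set Bullet Behavior "Strict Subproofs".
Import ListNotations.

Lemma open_ext (X : space) (A B : X -> Prop) :
  is_open X A -> (forall x, A x <-> B x) -> is_open X B.
Proof.
  intros HA H. replace B with A; [exact HA|].
  apply functional_extensionality; intro x; apply propositional_extensionality; apply H.
Qed.

Lemma open_empty (X : space) : is_open X (fun _ => False).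
Proof.
  eapply open_ext. apply (open_union X (fun _ => False)). intros A [].
  intros x; split; [intros [A [[] _]] | intros []].
Qed.

Lemma open_const (X : space) (P : Prop) : is_open X (fun _ => P).
Proof.
  destruct (classic P) as [H|H].
  - eapply open_ext. apply open_full. intros; split; auto.
  - eapply open_ext. apply open_empty. intros; split; [intros []|auto].
Qed.

Definition const (X Y : space) (y : Y) : cmap X Y :=
  CMap X Y (fun _ => y) (fun V _ => open_const X (V y)).

Lemma T1_neq (X : space) : T1 X -> forall a : X, is_open X (fun x => x <> a).
Proof.
  intros HT a. eapply open_ext.
  apply (open_union X (fun O => is_open X O /\ ~ O a)). intros A [HA _]; exact HA.
  intros x; split.
  - intros [A [[_ HA] Ax]] E. subst. auto.
  - intros Hx. destruct (HT x a Hx) as [O [HO [Ox Oa]]]. exists O. auto.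
Qed.

Lemma T1_or_neq (X : space) (P : Prop) : T1 X -> forall a : X, is_open X (fun x => P \/ x <> a).
Proof.
  intros HT a. destruct (classic P) as [H|H].
  - eapply open_ext. apply open_full. intros; split; auto.
  - eapply open_ext. apply (T1_neq X HT a). intros; split; auto. intros [|]; tauto.
Qed.

Definition cof_open (S : Type) (O : S -> Prop) : Prop :=
  (forall x, ~ O x) \/ exists l, forall x, ~ O x -> In x l.

Definition Cof (S : Type) : space.
Proof.
  refine (Space S (cof_open S) _ _ _).
  - right. exists nil. intros x H; exfalso; auto.
  - intros A B [HA|[l1 H1]] [HB|[l2 H2]].
    + left; intros x [Ax _]; exact (HA x Ax).
    + left; intros x [Ax _]; exact (HA x Ax).
    + left; intros x [_ Bx]; exact (HB x Bx).
    + right. exists (l1 ++ l2). intros x Hx. apply in_or_app.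
      destruct (classic (A x)) as [Ax|Ax]; [right; apply H2|left; apply H1; auto].
      intro Bx; apply Hx; auto.
  - intros F HF. destruct (classic (exists A, F A /\ exists x, A x)) as [[A [FA [x Ax]]]|H].
    + destruct (HF A FA) as [H0|[l Hl]]; [destruct (H0 x Ax)|].
      right. exists l. intros y Hy. apply Hl. intro Ay. apply Hy. exists A; auto.
    + left. intros x [A [FA Ax]]. apply H. eauto.
Defined.

Lemma cont_to_cof (T : space) (Y : Type) (k : T -> Y) :
  (forall y, is_open T (fun t => k t <> y)) ->
  forall O, cof_open Y O -> is_open T (fun t => O (k t)).
Proof.
  intros Hk O [H0|[l Hl]].
  - eapply open_ext. apply open_empty. intros t; split; [intros []|intros H; exact (H0 _ H)].
  - revert O Hl. induction l as [|a l IH]; intros O Hl.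
    + eapply open_ext. apply open_full. intros t; split; auto. intros _.
      destruct (classic (O (k t))) as [H|H]; auto. destruct (Hl _ H).
    + assert (Hop : is_open T (fun t => O (k t) \/ k t = a)).
      { apply (IH (fun y => O y \/ y = a)). intros y Hy.
        destruct (Hl y) as [E|E]. intro; apply Hy; auto. subst; exfalso; apply Hy; auto. exact E. }
      destruct (classic (O a)) as [Ha|Ha].
      * eapply open_ext. exact Hop. intros t; split; [intros [H|H]; [exact H| rewrite H; exact Ha]|auto].
      * eapply open_ext. apply (open_inter T _ _ Hop (Hk a)).
        intros t; split. intros [[H|H] H']; [exact H|contradiction].
        intros H; split; auto. intro E; rewrite E in H; contradiction.
Qed.

Lemma cmap_to_cof (T : space) (Y : Type) (k : T -> Y) :
  (forall y, is_open T (fun t => k t <> y)) -> cmap T (Cof Y).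
Proof. intros H. exact (CMap T (Cof Y) k (cont_to_cof T Y k H)). Defined.

Definition infinite (S : Type) := ~ finite_set (fun _ : S => True).

Lemma inj_infinite (S : Type) (f : nat -> S) : (forall m n, f m = f n -> m = n) -> infinite S.
Proof.
  intros Hf [l Hl].
  assert (forall l : list S, forall m, exists n, m <= n /\ ~ In (f n) l) as K.
  { induction l0 as [|a l0 IH]; intros m.
    - exists m; split; auto.
    - destruct (IH m) as [n1 [H1 H1']].
      destruct (classic (f n1 = a)) as [E|E].
      + destruct (IH (Datatypes.S n1)) as [n2 [H2 H2']]. exists n2; split; [lia|].
        intros [E2|E2]; [|contradiction]. rewrite <- E in E2. apply Hf in E2. subst. 
        lia.
      + exists n1; split; auto. intros [E2|E2]; [apply E; auto|contradiction]. }
  destruct (K l 0) as [n [_ Hn]]. apply Hn, Hl. exact I.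
Qed.
Module UL.
Import mathcomp.classical.classical_sets mathcomp.classical.filter.

Lemma ultra_exists (S : Type) (A : S -> Prop) :
  ~ finite_set A -> exists U : (S -> Prop) -> Prop, free_ultrafilter U /\ U A.
Proof.
intros HA.
pose (F := fun (B : S -> Prop) => exists l : list S, forall x, A x -> ~ In x l -> B x).
assert (FF : ProperFilter F).
{ split.
  - intros [l Hl]. apply HA. exists l. intros x Ax.
    destruct (classic (In x l)) as [H|H]; [exact H|]. destruct (Hl x Ax H).
  - split.
    + exists nil. intros; exact I.
    + intros B1 B2 [l1 H1] [l2 H2]. exists (l1 ++ l2). intros x Ax Hn.
      split; [apply H1|apply H2]; auto; intro; apply Hn; apply in_or_app; auto.
    + intros P Q PQ [l H]. exists l. intros x Ax Hn. apply PQ. apply H; auto. }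
destruct (ultraFilterLemma FF) as [G [UG FG]].
exists G. split; [split; [split|]|].
- intro H0. apply (filter_not_empty G). exact H0.
- split; [exact (@filterT _ G _)|].
  split; [intros B1 B2 HB H12; exact (@filterS _ G _ _ _ H12 HB)|].
  split; [intros B1 B2 H1 H2; exact (@filterI _ G _ _ _ H1 H2)|].
  intros B. destruct (in_ultra_setVsetC B UG) as [H|H]; [left|right]; exact H.
- intros B [l Hl] GB.
  assert (Gc : G (fun x => A x /\ ~ In x l)).
  { apply FG. exists l. intros x Ax Hn. split; auto. }
  apply (filter_not_empty G).
  refine (@filterS _ G _ _ _ _ (@filterI _ G _ _ _ GB Gc)).
  intros x [Bx [_ Hn]]. apply Hn, Hl, Bx.
- apply FG. exists nil. intros; auto.
Qed.
End UL.

Definition emi := excluded_middle_informative.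

Lemma step1 (C : subcat) : reflective C -> iso_closed C -> (forall X, C X -> T1 X) ->
  (forall Y : Type, infinite Y -> C (Cof Y)) -> forall T : space, T1 T -> C T.
Proof.
  intros Hrefl Hiso HC1 Hcof T HT.
  destruct (Hrefl T) as [R [eta [CR Huniv]]].
  assert (HR : T1 R) by (apply HC1; exact CR).
  assert (Hchi : forall G : T -> Prop, is_open T G ->
     exists h : cmap R (Cof (T + nat)), forall t,
       h (eta t) = (if emi (G t) then inl t else inr 0)).
  { intros G HG.
    pose (chi := fun t : T => if emi (G t) then @inl T nat t else inr 0).
    assert (Hf : forall y, is_open T (fun t => chi t <> y)).
    { intros [a|n].
      - eapply open_ext. apply (T1_or_neq T (~ G a) HT a).
        intros t; unfold chi; destruct (emi (G t)) as [Gt|Gt]; split.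
        + intros [H|H] E; inversion E; subst; contradiction.
        + intros H. destruct (classic (t = a)) as [E|E]; [subst; left; intro Ga; apply H; reflexivity|right; exact E].
        + intros _ E; discriminate.
        + intros _. destruct (classic (t = a)) as [E|E]; [subst; left; exact Gt|right; exact E].
      - destruct n as [|n].
        + eapply open_ext. exact HG.
          intros t; unfold chi; destruct (emi (G t)) as [Gt|Gt]; split; intros H; auto; try discriminate.
          all: try contradiction. all: exfalso; apply H; reflexivity.
        + eapply open_ext. apply open_full.
          intros t; unfold chi; destruct (emi (G t)); split; intros; auto; discriminate. }
    assert (Hinf : infinite (T + nat)) by (apply (inj_infinite _ inr); intros m n E; inversion E; auto).
    destruct (Huniv _ (Hcof _ Hinf) (cmap_to_cof T _ chi Hf)) as [h [Hh _]].
    exists h. intros t. apply (Hh t). }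
  assert (Hinj : forall t t', eta t = eta t' -> t = t').
  { intros t t' E. destruct (Hchi (fun _ => True) (open_full T)) as [h Hh].
    pose proof (Hh t) as H1. pose proof (Hh t') as H2. rewrite E in H1. rewrite H1 in H2.
    destruct (emi True); destruct (emi True); try contradiction. inversion H2; auto. }
  assert (Hsurj : forall r, exists t, eta t = r).
  { pose (im := fun r : R => exists t, eta t = r).
    pose (k0 := fun r : R => @inl R (R + nat) r).
    pose (k1 := fun r : R => if emi (im r) then @inl R (R + nat) r else inr (inl r)).
    assert (H0 : forall y, is_open R (fun r => k0 r <> y)).
    { intros [a|b].
      - eapply open_ext. apply (T1_neq R HR a). intros r; unfold k0; split; intros H E; apply H; [inversion E|subst]; auto.
      - eapply open_ext. apply open_full. intros r; unfold k0; split; intros; auto; discriminate. }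
    assert (H1 : forall y, is_open R (fun r => k1 r <> y)).
    { intros [a|[a|n]].
      - eapply open_ext. apply (T1_or_neq R (~ im a) HR a).
        intros r; unfold k1; destruct (emi (im r)) as [Ir|Ir]; split.
        + intros [H|H] E; inversion E; subst; contradiction.
        + intros H. destruct (classic (r = a)) as [E|E]; [subst; left; intro Ia; apply H; reflexivity|right; exact E].
        + intros _ E; discriminate.
        + intros _. destruct (classic (r = a)) as [E|E]; [subst; left; exact Ir|right; exact E].
      - eapply open_ext. apply (T1_or_neq R (im a) HR a).
        intros r; unfold k1; destruct (emi (im r)) as [Ir|Ir]; split.
        + intros _ E; discriminate.
        + intros _. destruct (classic (r = a)) as [E|E]; [subst; left; exact Ir|right; exact E].
        + intros [H|H] E; inversion E; subst; contradiction.
        + intros H. destruct (classic (r = a)) as [E|E]; [subst; left|right; exact E].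
          destruct (classic (im a)) as [Ia|Ia]; auto. exfalso; apply H; reflexivity.
      - eapply open_ext. apply open_full. intros r; unfold k1; destruct (emi (im r)); split; intros; auto; discriminate. }
    assert (Hinf : infinite (R + (R + nat))) by (apply (inj_infinite _ (fun n => inr (inr n))); intros m n E; inversion E; auto).
    pose (c0 := cmap_to_cof R _ k0 H0). pose (c1 := cmap_to_cof R _ k1 H1).
    destruct (Huniv _ (Hcof _ Hinf) (comp c0 eta)) as [g [_ Hg]].
    assert (E0 : meq c0 g) by (apply Hg; intros t; reflexivity).
    assert (E1 : meq c1 g).
    { apply Hg; intros t. simpl. unfold k1, k0. destruct (emi (im (eta t))) as [I|I]; auto.
      exfalso; apply I; exists t; auto. }
    intros r. pose proof (E0 r) as A. rewrite <- (E1 r) in A. simpl in A. unfold k0, k1 in A.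
    destruct (emi (im r)) as [I|I]; auto. discriminate. }
  pose (e' := fun r => proj1_sig (constructive_indefinite_description _ (Hsurj r))).
  assert (He1 : forall r, eta (e' r) = r) by (intros r; unfold e'; destruct constructive_indefinite_description; auto).
  assert (He2 : forall t, e' (eta t) = t) by (intros t; apply Hinj; apply He1).
  assert (Hc : forall G, is_open T G -> is_open R (fun r => G (e' r))).
  { intros G HG. destruct (Hchi G HG) as [h Hh].
    eapply open_ext. apply (fn_cont _ _ h (fun y => y <> inr 0)).
    right. exists [inr 0]. intros y Hy. left. destruct (classic (y = inr 0)); auto. contradiction.
    intros r. simpl. rewrite <- (He1 r) at 1. rewrite Hh.
    destruct (emi (G (e' r))); split; intros; auto; try discriminate. exfalso; apply H; auto. }
  apply (Hiso R T); auto.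
  exists (CMap R T e' Hc), eta. split; intros x; simpl; auto.
Qed.

Section Step2.
Variable S : Type.

Definition isinf (tau : (S -> Prop) -> Prop) : Prop :=
  exists l : list (S * ((S -> Prop) -> Prop)),
    l <> [] /\ (forall p, In p l -> free_ultrafilter (snd p)) /\
    forall O, tau O <-> (forall p, In p l -> ultra_open (fst p) (snd p) O).

Definition Idx := {tau | isinf tau}.

Definition ile (a b : Idx) : Prop := forall O, proj1_sig b O -> proj1_sig a O.

Definition sp (a : Idx) : space.
Proof.
  refine (Space S (proj1_sig a) _ _ _); destruct a as [tau [l [Hne [Hfree Hl]]]]; simpl.
  - apply Hl. intros p Hp _. exists (fun _ => True). split; auto.
    destruct (Hfree p Hp) as [[_ [HT _]] _]; exact HT.
  - intros A B HA HB. apply Hl. rewrite Hl in HA, HB. intros p Hp [Ax Bx].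
    destruct (HA p Hp Ax) as [V1 [U1 H1]]. destruct (HB p Hp Bx) as [V2 [U2 H2]].
    exists (fun x => V1 x /\ V2 x). split.
    + destruct (Hfree p Hp) as [[_ [_ [_ [HI _]]]] _]. apply HI; auto.
    + intros y [[Hy1 Hy2]|Hy]; split; [apply H1|apply H2|apply H1|apply H2]; auto.
  - intros F HF. apply Hl. intros p Hp [A [FA Ax]].
    pose proof (HF A FA) as HA. rewrite Hl in HA.
    destruct (HA p Hp Ax) as [V [UV HV]]. exists V; split; auto.
    intros y Hy. exists A; split; auto.
Defined.

Lemma free_ex : infinite S -> exists (s : S) (U : (S -> Prop) -> Prop), free_ultrafilter U.
Proof.
  intros Hinf. destruct (UL.ultra_exists S (fun _ => True) Hinf) as [U [HU _]].
  destruct (classic (exists s : S, True)) as [[s _]|Hn].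
  - exists s, U; auto.
  - exfalso; apply Hinf. exists nil. intros x _. apply Hn. exists x; auto.
Qed.

Lemma single_idx (s : S) (U : (S -> Prop) -> Prop) : free_ultrafilter U ->
  isinf (fun O => ultra_open s U O).
Proof.
  intros HU. exists [(s, U)]. split; [discriminate|]. split.
  - intros p [E|[]]; subst; exact HU.
  - intros O; split.
    + intros H p [E|[]]; subst; exact H.
    + intros H. apply (H (s, U)); left; auto.
Qed.

Lemma join_idx (a b : Idx) : exists c, ile a c /\ ile b c.
Proof.
  destruct a as [ta [la [Hna [Hfa Hla]]]]. destruct b as [tb [lb [Hnb [Hfb Hlb]]]].
  assert (Hc : isinf (fun O => forall p, In p (la ++ lb) -> ultra_open (fst p) (snd p) O)).
  { exists (la ++ lb). split; [destruct la; [contradiction|discriminate]|]. split.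
    - intros p Hp. apply in_app_or in Hp. destruct Hp; auto.
    - intros O; split; auto. }
  exists (exist _ _ Hc). split; intros O HO; simpl in *.
  - apply Hla. intros p Hp. apply HO. apply in_or_app; auto.
  - apply Hlb. intros p Hp. apply HO. apply in_or_app; auto.
Qed.

Lemma ile_trans (a b c : Idx) : ile a b -> ile b c -> ile a c.
Proof. unfold ile; auto. Qed.

Lemma directed_idx (Hinf : infinite S) : forall l : list Idx, exists k, forall i, In i l -> ile i k.
Proof.
  induction l as [|a l IH].
  - destruct (free_ex Hinf) as [s [U HU]]. exists (exist _ _ (single_idx s U HU)). intros i [].
  - destruct IH as [k Hk]. destruct (join_idx a k) as [c [Hac Hkc]].
    exists c. intros i [E|Hi]; [subst; auto|]. eapply ile_trans; eauto.
Qed.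

Lemma ile_antisym (a b : Idx) : ile a b -> ile b a -> a = b.
Proof.
  intros H1 H2. destruct a as [ta pa], b as [tb pb]. unfold ile in *; simpl in *.
  assert (ta = tb). { apply functional_extensionality; intro O; apply propositional_extensionality; split; auto. }
  subst. f_equal. apply proof_irrelevance.
Qed.

Definition arr_idx (a b : Idx) (h : ile a b) : cmap (sp a) (sp b) :=
  CMap (sp a) (sp b) (fun x => x) (fun V HV => h V HV).

Lemma cof_in_idx (a : Idx) : forall O, cof_open S O -> proj1_sig a O.
Proof.
  destruct a as [ta [la [Hna [Hfa Hla]]]]. simpl. intros O HO. apply Hla.
  intros p Hp Ox. destruct HO as [H0|[l Hl]]; [destruct (H0 _ Ox)|].
  exists O. split; auto. 2: intros y [Hy|Hy]; subst; auto.
  destruct (Hfa p Hp) as [[_ [_ [_ [_ HU]]]] Hfr].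
  destruct (HU O) as [H|H]; auto. exfalso. apply (Hfr _ (ex_intro _ l Hl) H).
Qed.

Lemma all_idx_cof (P : S -> Prop) : (forall a : Idx, proj1_sig a P) -> cof_open S P.
Proof.
  intros H. destruct (classic (exists x, P x)) as [[x Px]|Hn].
  2: { left. intros x Px; apply Hn; eauto. }
  right. destruct (classic (finite_set (fun y => ~ P y))) as [F|F]; [exact F|].
  destruct (UL.ultra_exists S _ F) as [U [HU UnP]].
  pose proof (H (exist _ _ (single_idx x U HU))) as Hx. simpl in Hx.
  destruct (Hx Px) as [V [UV HV]].
  destruct HU as [[Hne [_ [Hup [HI _]]]] _]. exfalso. apply Hne.
  apply (Hup _ _ (HI _ _ UV UnP)). intros y [Vy nPy]. apply nPy, HV; auto.
Qed.

End Step2.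

Definition theD (C : subcat) (S : Type) (Hinf : infinite S)
  (HC : forall a : Idx S, C (sp S a)) : ddiagram C.
Proof.
  refine (DDiagram C (Idx S) (ile S) _ (ile_trans S) (ile_antisym S) (directed_idx S Hinf)
           (sp S) HC (arr_idx S) _ _ _).
  - intros i O H; exact H.
  - intros i h x; reflexivity.
  - intros i j k h1 h2 h3 x; reflexivity.
  - intros i j h W _ g g' E x. apply (E x).
Defined.

Lemma step2 (C : subcat) : reflective C -> iso_closed C -> (forall X, C X -> T1 X) ->
  (forall S : space, inf_of_finitely_many_ultraspaces S -> C S) ->
  forall X : space, C X -> finitely_generated C X -> X ->
  forall S : Type, infinite S -> C (Cof S).
Proof.
  intros Hrefl Hiso HC1 Hult X CX Hfg x0 S Hinf.
  assert (HC : forall a : Idx S, C (sp S a)).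
  { intros a. apply Hult. destruct a as [tau [l [Hne [Hfree Hl]]]]. exists l. auto. }
  pose (D := theD C S Hinf HC).
  destruct (Hrefl (Cof S)) as [R [eta [CR Huniv]]].
  assert (HR : T1 R) by (apply HC1; exact CR).
  pose (idc := fun a : Idx S => CMap (sp S a) (Cof S) (fun x => x) (cof_in_idx S a)).
  pose (c := fun a : Idx S => comp eta (idc a)).
  destruct (directed_idx S Hinf nil) as [a0 _].
  assert (Hcol : is_colimit_in C D R c).
  { split; [exact CR|]. split; [intros i j h x; reflexivity|].
    intros W CW d Hd.
    assert (Hdd : forall a x, d a x = d a0 x).
    { intros a x. destruct (join_idx S a a0) as [k [Hak Ha0k]].
      rewrite <- (Hd a k Hak x). rewrite <- (Hd a0 k Ha0k x). reflexivity. }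
    assert (Hcont : forall V, is_open W V -> is_open (Cof S) (fun x => V (d a0 x))).
    { intros V HV. apply all_idx_cof. intros a.
      pose proof (fn_cont _ _ (d a) V HV) as H. simpl in H.
      assert (E : (fun x : S => V (d a x)) = (fun x : S => V (d a0 x))).
      { apply functional_extensionality; intros x; rewrite Hdd; reflexivity. }
      change (proj1_sig a (fun x : S => V (d a0 x))). rewrite <- E. exact H. }
    destruct (Huniv W CW (CMap (Cof S) W (fun x => d a0 x) Hcont)) as [g [Hg Hgu]].
    exists g. split.
    - intros a x. simpl. pose proof (Hg x) as Hgx. simpl in Hgx. rewrite Hgx. symmetry; apply Hdd.
    - intros u' Hu'. apply Hgu. intros x. simpl. apply (Hu' a0 x). }
  assert (Hsurj : forall r, exists s, eta s = r).
  { intros r. destruct (proj1 (Hfg D R c Hcol (const X R r))) as [i [g Hg]].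
    exists (g x0). symmetry. apply (Hg x0). }
  assert (Hinj : forall s s', eta s = eta s' -> s = s').
  { intros s s' E.
    destruct (proj2 (Hfg D R c Hcol (const X R (eta s))) a0 (const X (sp S a0) s) (const X (sp S a0) s'))
      as [j [h Hh]].
    - intros x; reflexivity.
    - intros x; exact E.
    - exact (Hh x0). }
  pose (e' := fun r => proj1_sig (constructive_indefinite_description _ (Hsurj r))).
  assert (He1 : forall r, eta (e' r) = r) by (intros r; unfold e'; destruct constructive_indefinite_description; auto).
  assert (He2 : forall s, e' (eta s) = s) by (intros s; apply Hinj; apply He1).
  assert (Hf : forall y, is_open R (fun r => e' r <> y)).
  { intros y. eapply open_ext. apply (T1_neq R HR (eta y)).
    intros r; split; intros H E; apply H.
    - rewrite <- E. symmetry. apply He1.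
    - rewrite E. apply He2. }
  apply (Hiso R (Cof S)); auto.
  exists (cmap_to_cof R S e' Hf), eta. split; intros x; simpl; auto.
Qed.

Theorem theorem7p8 (C : subcat) :
  reflective C -> iso_closed C -> contains_two_point_discrete C ->
  proper_in_Top1 C ->
  (forall S : space, inf_of_finitely_many_ultraspaces S -> C S) ->
  forall X : space, C X -> (finitely_generated C X <-> (X -> False)).
Proof.
  intros Hrefl Hiso _ [HC1 [T [HT nCT]]] Hult X CX. split.
  - intros Hfg x0. apply nCT. apply (step1 C Hrefl Hiso HC1); auto.
    intros Y HY. exact (step2 C Hrefl Hiso HC1 Hult X CX Hfg x0 Y HY).
  - intros He D Z c Hcol f. split.
    + destruct (directed C D nil) as [k _]. exists k.
      unshelve eexists (CMap X (obj D k) (fun x => False_rect _ (He x)) _).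
      * intros V _. eapply open_ext. apply open_empty. intros x; destruct (He x).
      * intros x; destruct (He x).
    + intros i g g' _ _. exists i, (le_refl C D i). intros x; destruct (He x).
Qed.
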